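(* Let $\mathcal{S}$ be a finite state space (possibly containing terminal states), let $\pi=\pi_d$ be a policy, and let $\mathbf{P}^{\pi}\in\mathbb{R}^{|\mathcal{S}|\times|\mathcal{S}|}$ be the induced state-transition matrix, $\mathbf{P}^{\pi}(s,s')$ being the probability of moving from $s$ to $s'$ under $\pi$, with the rows of terminal states set to zero. Let $\gamma\in(0,1)$ and $\lambda>0$. Define the successor representation $\mathbf{\Psi}^\pi=(\mathbf{I}-\gamma\mathbf{P}^\pi)^{-1}$ and the default representation $\mathbf{Z}=\big[\operatorname{diag}(\exp(-\mathbf{r}/\lambda))-\mathbf{P}^{\pi_d}\big]^{-1}$, where $\mathbf{r}\in\mathbb{R}^{|\mathcal{S}|}$ is the vector of state rewards and $\exp$ acts entrywise. Suppose the reward function is constant and negative: $r(s)=r(s')<0$ for all $s,s'\in\mathcal{S}$. Then $\mathbf{\Psi}^\pi$ and $\mathbf{Z}$ share the same set of eigenvectors. Furthermore, if $\mathbf{\Psi}^\pi$ and $\mathbf{Z}$ are symmetric, then, ordering the eigenvectors of each matrix by their corresponding eigenvalues, the $i$-th eigenvectors of $\mathbf{\Psi}^\pi$ and $\mathbf{Z}$ are equal, and the $i$-th eigenvalues $\mu_{\mathrm{SR},i}$ of $\mathbf{\Psi}^\pi$ and $\mu_{\mathrm{DR},i}$ of $\mathbf{Z}$ satisfy $$\mu_{\mathrm{SR},i}=\Big[\gamma\Big(\mu_{\mathrm{DR},i}^{-1}-\exp\big(-r(s)/\lambda\big)+\gamma^{-1}\Big)\Big]^{-1}.$$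
   Context: Setting: a Markov decision process with finite state space $\mathcal{S}$, finite action space $\mathcal{A}$, transition function $p$, reward function $r:\mathcal{S}\to\mathbb{R}$, and a default policy $\pi_d$ assigning nonzero probability to every state-action pair. The transition matrix induced by a policy has rows for terminal states set to all zeros (and rows of non-terminal states summing to one). $\gamma$ is the discount factor of the successor representation and $\lambda>0$ is the relative importance of the deviation (KL) cost in the linearly solvable MDP defining the default representation. *)

(* Defs.v *)
From HB Require Import structures.
From mathcomp Require Import all_boot all_order all_algebra.
From mathcomp Require Import all_classical all_reals.
From mathcomp Require Import sequences exp.
Set Implicit Arguments. Unset Strict Implicit. Unset Printing Implicit Defensive.
Import Order.TTheory GRing.Theory Num.Theory.
Local Open Scope ring_scope.

Section MDP.
Variable R : realType.

(* States are 'I_n, actions are 'I_m. [pi s a] is the probability of action a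
   in state s, [p s a s'] the probability of moving to s' when taking a in s.
   Terminal states T have their rows set to zero. *)
Definition trans_mx (n m : nat) (T : {set 'I_n}) (pi : 'I_n -> 'I_m -> R)
  (p : 'I_n -> 'I_m -> 'I_n -> R) : 'M[R]_n :=
  \matrix_(s, s') (if s \in T then 0 else \sum_(a < m) pi s a * p s a s').

Definition SR (n : nat) (gamma : R) (P : 'M[R]_n) : 'M[R]_n :=
  invmx (1%:M - gamma *: P).

Definition DR (n : nat) (r : 'I_n -> R) (lambda : R) (P : 'M[R]_n) : 'M[R]_n :=
  invmx (diag_mx (\row_s expR (- r s / lambda)) - P).

Definition eigvec_with (n : nat) (A : 'M[R]_n) (v : 'cV[R]_n) (mu : R) : Prop :=
  v != 0 /\ A *m v = mu *: v.

Definition is_eigvec (n : nat) (A : 'M[R]_n) (v : 'cV[R]_n) : Prop :=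
  exists mu : R, eigvec_with A v mu.

End MDP.

(* Main.v *)
Require Import Defs.
From HB Require Import structures.
From mathcomp Require Import all_boot all_order all_algebra.
From mathcomp Require Import all_classical all_reals.
From mathcomp Require Import sequences exp.
From mathcomp Require Import ring lra.
Import Order.TTheory GRing.Theory Num.Theory.
Local Open Scope ring_scope.

Lemma nz_entry {R : realFieldType} {n : nat} (v : 'cV[R]_n) : v != 0 -> exists i, v i 0 != 0.
Proof.
move=> hv; case: (pickP (fun i => v i 0 != 0)) => [i hi|h]; first by exists i.
case/negP: hv; apply/eqP/matrixP => i j; rewrite ord1 mxE.
by move: (h i) => /negbFE/eqP.
Qed.

Lemma eig_bound {R : realFieldType} {n : nat} (P : 'M[R]_n) (v : 'cV_n) x :
  (forall i j, 0 <= P i j) -> (forall i, \sum_j P i j <= 1) ->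
  v != 0 -> P *m v = x *: v -> `|x| <= 1.
Proof.
move=> hP hs hv he.
have [i0 hi0] := @nz_entry R n v hv.
case: (arg_maxP (fun i => `|v i 0|) (isT : predT i0)) => i _ hmax.
have hpos : 0 < `|v i 0|.
  by apply: lt_le_trans (hmax i0 isT); rewrite normr_gt0.
have e : x * v i 0 = \sum_j P i j * v j 0.
  by move/matrixP: he => /(_ i 0); rewrite !mxE => <-.
rewrite -(ler_pM2r hpos) mul1r -normrM e.
apply: le_trans (ler_norm_sum _ _ _) _.
apply: (@le_trans _ _ (\sum_j P i j * `|v i 0|)).
  apply: ler_sum => j _; rewrite normrM ger0_norm // ler_wpM2l //.
  exact: hmax.
by rewrite -mulr_suml ler_piMl.
Qed.

Lemma unit_of_ker {R : realFieldType} {n : nat} (A : 'M[R]_n) :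
  (forall v : 'cV_n, A *m v = 0 -> v = 0) -> A \in unitmx.
Proof.
move=> h; rewrite -unitmx_tr unitmxE unitfE; apply/negP => /det0P [w hw].
move=> /(congr1 trmx); rewrite trmx_mul trmxK trmx0 => /h /(congr1 trmx).
by rewrite trmxK trmx0 => hw0; rewrite hw0 eqxx in hw.
Qed.

Lemma inv_eig {R : realFieldType} {n : nat} (A : 'M[R]_n) (v : 'cV_n) a :
  A \in unitmx -> v != 0 -> A *m v = a *: v ->
  a != 0 /\ invmx A *m v = a^-1 *: v.
Proof.
move=> hA hv he.
have ha : a != 0.
  apply/negP => /eqP ha; move: he; rewrite ha scale0r => he.
  by move: hv; rewrite -(mulKmx hA v) he mulmx0 eqxx.
split=> //.
by rewrite -[in RHS](mulKmx hA v) he -scalemxAr scalerA mulVf // scale1r.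
Qed.

Lemma inv_eig' {R : realFieldType} {n : nat} (A : 'M[R]_n) (v : 'cV_n) mu :
  A \in unitmx -> v != 0 -> invmx A *m v = mu *: v ->
  mu != 0 /\ A *m v = mu^-1 *: v.
Proof.
move=> hA hv he.
have := @inv_eig R n (invmx A) v mu; rewrite unitmx_inv invmxK; exact.
Qed.

Arguments inv_eig {R n A v a}.
Arguments nz_entry {R n v}.
Arguments inv_eig' {R n A v mu}.

Theorem theorem3p1 (R : realType) (n m : nat) (T : {set 'I_n})
  (pi : 'I_n -> 'I_m -> R) (p : 'I_n -> 'I_m -> 'I_n -> R)
  (r : 'I_n -> R) (gamma lambda : R) :
  (forall s a s', 0 <= p s a s') ->
  (forall s a, \sum_(s' < n) p s a s' = 1) ->
  (forall s a, 0 < pi s a) ->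
  (forall s, \sum_(a < m) pi s a = 1) ->
  0 < gamma -> gamma < 1 -> 0 < lambda ->
  (forall s s', r s = r s') -> (forall s, r s < 0) ->
  let P := trans_mx T pi p in
  let Psi := SR gamma P in
  let Z := DR r lambda P in
  (forall v : 'cV[R]_n, is_eigvec Psi v <-> is_eigvec Z v) /\
  (Psi^T = Psi -> Z^T = Z ->
   forall (V : 'M[R]_n) (mu : 'I_n -> R),
     V \in unitmx ->
     (forall i, eigvec_with Psi (col i V) (mu i)) ->
     (forall i j : 'I_n, (i <= j)%N -> mu i <= mu j) ->
     exists nu : 'I_n -> R,
       (forall i j : 'I_n, (i <= j)%N -> nu i <= nu j) /\
       (forall i, eigvec_with Z (col i V) (nu i) /\
          mu i = (gamma * ((nu i)^-1 - expR (- r i / lambda) + gamma^-1))^-1)).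
Proof.
move=> hp hsum hpi hpis hg0 hg1 hl hr hneg P Psi Z.
have hPnn : forall i j, 0 <= P i j.
  move=> i j; rewrite mxE; case: ifP => _ //.
  by apply: sumr_ge0 => a _; apply: mulr_ge0; [exact: ltW|].
have hPs : forall i, \sum_j P i j <= 1.
  move=> i; case hT: (i \in T).
    by under eq_bigr => j _ do rewrite mxE hT; rewrite big1.
  under eq_bigr => j _ do rewrite mxE hT.
  rewrite exchange_big /=.
  under eq_bigr => a _ do rewrite -mulr_sumr hsum mulr1.
  by rewrite hpis.
have eigb : forall (v : 'cV[R]_n) x, v != 0 -> P *m v = x *: v -> -1 <= x <= 1.
  by move=> v x hv he; rewrite -ler_norml; exact: eig_bound hPnn hPs hv he.
pose c s := expR (- r s / lambda).
have hc : forall s, 1 < c s.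
  by move=> s; apply: pexpR_gt1; apply: divr_gt0 => //; rewrite oppr_gt0.
have hD : forall s, diag_mx (\row_s c s) = (c s)%:M.
  by move=> s; apply/matrixP => i j; rewrite !mxE /c; case: (i == j) => /=; rewrite ?(hr j s) ?(hr i s).
have hM1 : 1%:M - gamma *: P \in unitmx.
  apply: unit_of_ker => v; rewrite mulmxBl mul1mx -scalemxAl => /eqP.
  rewrite subr_eq0 => /eqP hv.
  case: (eqVneq v 0) => // hv0; exfalso.
  have : P *m v = gamma^-1 *: v.
    by rewrite [in RHS]hv scalerA mulVf ?scale1r // gt_eqF.
  move=> /(eigb _ _ hv0) /andP [_].
  have : 1 < gamma^-1 by rewrite invf_gt1.
  by move=> h1 h2; move: (lt_le_trans h1 h2); rewrite ltxx.
have hM2 : forall s, (c s)%:M - P \in unitmx.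
  move=> s; apply: unit_of_ker => v; rewrite mulmxBl mul_scalar_mx => /eqP.
  rewrite subr_eq0 => /eqP hv.
  case: (eqVneq v 0) => // hv0; exfalso.
  move: (eigb _ _ hv0 (esym hv)) => /andP [_ h2].
  by move: (lt_le_trans (hc s) h2); rewrite ltxx.
have hZ : forall s, Z = invmx ((c s)%:M - P) by move=> s; rewrite -(hD s).
have E1 : forall (v : 'cV[R]_n) mu, v != 0 -> Psi *m v = mu *: v ->
    mu != 0 /\ P *m v = ((1 - mu^-1) / gamma) *: v.
  move=> v mu hv he; have [hmu he'] := inv_eig' hM1 hv he.
  split=> //; move: he'; rewrite mulmxBl mul1mx -scalemxAl => he'.
  have he2 : gamma *: (P *m v) = v - mu^-1 *: v by rewrite -he' opprB addrC subrK.
  rewrite mulrC -scalerA scalerBl scale1r -he2 scalerA mulVf ?scale1r //.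
  by rewrite gt_eqF.
have E2 : forall (v : 'cV[R]_n) x, v != 0 -> P *m v = x *: v ->
    Psi *m v = (1 - gamma * x)^-1 *: v.
  move=> v x hv he; apply: (inv_eig hM1 hv _).2.
  by rewrite mulmxBl mul1mx -scalemxAl he scalerA scalerBl scale1r.
have E3 : forall s (v : 'cV[R]_n) nu, v != 0 -> Z *m v = nu *: v ->
    nu != 0 /\ P *m v = (c s - nu^-1) *: v.
  move=> s v nu hv; rewrite (hZ s) => he; have [hnu he'] := inv_eig' (hM2 s) hv he.
  split=> //; move: he'; rewrite mulmxBl mul_scalar_mx => he'.
  by rewrite scalerBl -he' opprB addrC subrK.
have E4 : forall s (v : 'cV[R]_n) x, v != 0 -> P *m v = x *: v ->
    Z *m v = (c s - x)^-1 *: v.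
  move=> s v x hv he; rewrite (hZ s); apply: (inv_eig (hM2 s) hv _).2.
  by rewrite mulmxBl mul_scalar_mx he scalerBl.
split.
  move=> v; split.
    move=> [mu [hv he]]; have [s _] := nz_entry hv.
    have [_ he'] := E1 v mu hv he.
    by exists (c s - (1 - mu^-1) / gamma)^-1; split=> //; apply: E4.
  move=> [nu [hv he]]; have [s _] := nz_entry hv.
  have [_ he'] := E3 s v nu hv he.
  by exists (1 - gamma * (c s - nu^-1))^-1; split=> //; apply: E2.
move=> _ _ V mu hV hmu hmono.
pose x i := (1 - (mu i)^-1) / gamma.
have hx : forall i, [/\ -1 <= x i <= 1, mu i = (1 - gamma * x i)^-1 &
     P *m col i V = x i *: col i V].
  move=> i; have [hv he] := hmu i; have [hm he'] := E1 _ _ hv he.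
  split; first exact: eigb he'.
    by rewrite /x mulrC mulfVK ?gt_eqF // opprB addrC subrK invrK.
  exact: he'.
exists (fun i => (c i - x i)^-1); split.
  move=> i j hij; have -> : c i = c j by rewrite /c (hr i j).
  have [/andP [hi1 hi2] hmi _] := hx i; have [/andP [hj1 hj2] hmj _] := hx j.
  have hcj := hc j.
  have hxij : x i <= x j.
    by have := hmono i j hij; rewrite hmi hmj lef_pV2 ?posrE; nra.
  by rewrite lef_pV2 ?posrE; lra.
move=> i; have [/andP [hi1 hi2] hmi he] := hx i; split.
  split; first by have [] := hmu i.
  exact: (E4 i _ _ (hmu i).1 he).
rewrite invrK hmi; congr (_^-1).
rewrite mulrDr mulfV ?gt_eqF //.
by rewrite /c addrAC subrr add0r mulrN addrC.
Qed.
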